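(* Let $\{B_n(\mathbf{t})\}_{n\in\mathbb{N}}$ be a solution of the Volterra lattice hierarchy $$\partial_{t_{2k}}B_n=B_n\big(V^{(2k)}_{n+1}-V^{(2k)}_{n-1}\big),$$ with $V^{(2)}_n=B_n$, $V^{(4)}_n=V^{(2)}_n\big(V^{(2)}_{n-1}+V^{(2)}_n+V^{(2)}_{n+1}\big)$, $V^{(6)}_n=V^{(2)}_n\big(V^{(2)}_{n-1}V^{(2)}_{n+1}+V^{(4)}_{n-1}+V^{(4)}_n+V^{(4)}_{n+1}\big)$. For a given $n\in\mathbb{N}$ let $\phi(\mathbf{t})=B_n(\mathbf{t})$ and write $x=t_2$, $y=t_4$, $t=t_6$. Then $\phi$ satisfies the modified Kadomtsev–Petviashvili equation $$4\phi_t=6\phi_x\big(\xi-\phi^2\big)+\phi_{xxx}+3\xi_y,\qquad \phi_y=\xi_x,$$ for a function $\xi$ (namely $\xi=\partial_y\partial_x^{-1}\phi$).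
   Context: $\mathbf{t}=(t_2,t_4,t_6,\dots)$ are the even coupling constants; subscripts denote partial derivatives; $\partial_x^{-1}$ denotes an $x$-antiderivative. *)

(* Defs.v *)
From Stdlib Require Import Reals ZArith.
From Coquelicot Require Import Coquelicot.
Open Scope R_scope.

(* A lattice field: B m x y t = B_m(t_2 = x, t_4 = y, t_6 = t), m : Z. *)
Definition lattice := Z -> R -> R -> R -> R.

Definition V2 (B : lattice) (m : Z) (x y t : R) : R := B m x y t.

Definition V4 (B : lattice) (m : Z) (x y t : R) : R :=
  V2 B m x y t * (V2 B (m - 1)%Z x y t + V2 B m x y t + V2 B (m + 1)%Z x y t).

Definition V6 (B : lattice) (m : Z) (x y t : R) : R :=
  V2 B m x y t * (V2 B (m - 1)%Z x y t * V2 B (m + 1)%Z x y t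
                  + V4 B (m - 1)%Z x y t + V4 B m x y t + V4 B (m + 1)%Z x y t).

Definition volterra_solution (B : lattice) : Prop :=
  forall (m : Z) (x y t : R),
    is_derive (fun x' => B m x' y t) x
      (B m x y t * (V2 B (m + 1)%Z x y t - V2 B (m - 1)%Z x y t)) /\
    is_derive (fun y' => B m x y' t) y
      (B m x y t * (V4 B (m + 1)%Z x y t - V4 B (m - 1)%Z x y t)) /\
    is_derive (fun t' => B m x y t') t
      (B m x y t * (V6 B (m + 1)%Z x y t - V6 B (m - 1)%Z x y t)).

(* Main.v *)
Require Import Defs.
From Stdlib Require Import Reals ZArith Lia FunctionalExtensionality.
From Coquelicot Require Import Coquelicot.
Open Scope R_scope.

Lemma dmul (f g : R -> R) x df dg : is_derive f x df -> is_derive g x dg ->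
  is_derive (fun t => f t * g t) x (df * g x + f x * dg).
Proof. intros Hf Hg. apply (is_derive_mult f g x df dg Hf Hg). intros; apply Rmult_comm. Qed.
Lemma dminus (f g : R -> R) x df dg : is_derive f x df -> is_derive g x dg ->
  is_derive (fun t => f t - g t) x (df - dg).
Proof. intros Hf Hg. apply (is_derive_minus f g x df dg Hf Hg). Qed.
Lemma dplus (f g : R -> R) x df dg : is_derive f x df -> is_derive g x dg ->
  is_derive (fun t => f t + g t) x (df + dg).
Proof. intros Hf Hg. apply (is_derive_plus f g x df dg Hf Hg). Qed.
Lemma deq (f : R -> R) (x l1 l2 : R) : is_derive f x l1 -> l1 = l2 -> is_derive f x l2.
Proof. intros H <-; exact H. Qed.

Ltac Dtac leaf :=
  repeat match goal with
  | |- is_derive (fun z => @?a z * @?b z) _ _ => apply (dmul a b)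
  | |- is_derive (fun z => @?a z - @?b z) _ _ => apply (dminus a b)
  | |- is_derive (fun z => @?a z + @?b z) _ _ => apply (dplus a b)
  | |- is_derive _ _ _ => leaf
  end.

Lemma Dunique (f : R -> R) (x l : R) : is_derive f x l -> Derive f x = l.
Proof. apply is_derive_unique. Qed.

Ltac rewD leaf :=
  repeat match goal with |- context [Derive ?g ?p] =>
    erewrite (Dunique g p) by (Dtac leaf) end.

Ltac leafB B n x y t Hx Hy Ht :=
  match goal with
  | |- is_derive (fun z : _ => B (n + ?j)%Z z y t) ?p _ => apply (Hx j p)
  | |- is_derive (fun z : _ => B (n + ?j)%Z x z t) y _ => apply (Hy j)
  | |- is_derive (fun z : _ => B (n + 0)%Z x y z) t _ => apply Ht
  end.

Ltac normB B n :=
  repeat match goal with |- context [B ?k] =>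
    lazymatch k with
    | (n + ?j)%Z => let j' := eval vm_compute in j in
        tryif constr_eq j j' then fail else change j with j'
    | _ => first [ replace k with (n+0)%Z by ring | replace k with (n+1)%Z by ring
                 | replace k with (n+(-1))%Z by ring | replace k with (n+2)%Z by ring
                 | replace k with (n+(-2))%Z by ring | replace k with (n+3)%Z by ring
                 | replace k with (n+(-3))%Z by ring ]
    end end.

Theorem theorem2p4 (B : lattice) (n : Z) :
  volterra_solution B ->
  exists xi : R -> R -> R -> R,
    forall x y t : R,
      (forall k : nat, (k <= 3)%nat -> ex_derive_n (fun x' => B n x' y t) k x) /\
      ex_derive (fun x' => xi x' y t) x /\
      ex_derive (fun y' => xi x y' t) y /\
      (* phi_y = xi_x *)
      Derive (fun y' => B n x y' t) y = Derive (fun x' => xi x' y t) x /\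
      (* 4 phi_t = 6 phi_x (xi - phi^2) + phi_xxx + 3 xi_y *)
      4 * Derive (fun t' => B n x y t') t =
        6 * Derive (fun x' => B n x' y t) x * (xi x y t - (B n x y t) ^ 2)
        + Derive_n (fun x' => B n x' y t) 3 x
        + 3 * Derive (fun y' => xi x y' t) y.
Proof.
  intros HB. rewrite <- (Z.add_0_r n).
  exists (fun x y t => B (n+0)%Z x y t *
            (B (n+(-1))%Z x y t + B (n+0)%Z x y t + B (n+1)%Z x y t)).
  intros x y t.
  assert (Hx : forall (j : Z) x0, is_derive (fun z => B (n+j)%Z z y t) x0
      (B (n+j)%Z x0 y t * (B (n+(j+1))%Z x0 y t - B (n+(j-1))%Z x0 y t))).
  { intros j x0. destruct (HB (n+j)%Z x0 y t) as [H _]. eapply deq; [exact H|].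
    unfold V2. replace (n+j+1)%Z with (n+(j+1))%Z by ring; replace (n+j-1)%Z with (n+(j-1))%Z by ring; reflexivity. }
  assert (Hy : forall (j : Z), is_derive (fun z => B (n+j)%Z x z t) y
      (B (n+j)%Z x y t * (
        B (n+(j+1))%Z x y t * (B (n+j)%Z x y t + B (n+(j+1))%Z x y t + B (n+(j+2))%Z x y t)
      - B (n+(j-1))%Z x y t * (B (n+(j-2))%Z x y t + B (n+(j-1))%Z x y t + B (n+j)%Z x y t)))).
  { intros j. destruct (HB (n+j)%Z x y t) as [_ [H _]]. eapply deq; [exact H|].
    unfold V4, V2.
    replace (n+j+1-1)%Z with (n+j)%Z by ring; replace (n+j+1+1)%Z with (n+(j+2))%Z by ring;
    replace (n+j-1-1)%Z with (n+(j-2))%Z by ring; replace (n+j-1+1)%Z with (n+j)%Z by ring;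
    replace (n+j+1)%Z with (n+(j+1))%Z by ring; replace (n+j-1)%Z with (n+(j-1))%Z by ring. reflexivity. }
  assert (Ht : is_derive (fun z => B (n+0)%Z x y z) t
      (B (n+0)%Z x y t * (V6 B (n+0+1)%Z x y t - V6 B (n+0-1)%Z x y t))).
  { apply HB. }
  set (f := fun x' => B (n + 0)%Z x' y t).
  set (d1 := fun z => B (n+0)%Z z y t * (B (n+(0+1))%Z z y t - B (n+(0-1))%Z z y t)).
  set (d2 := fun z => B (n+0)%Z z y t * (B (n+1)%Z z y t - B (n+(-1))%Z z y t)
                        * (B (n+1)%Z z y t - B (n+(-1))%Z z y t)
      + B (n+0)%Z z y t * (B (n+1)%Z z y t * (B (n+2)%Z z y t - B (n+0)%Z z y t)
                         - B (n+(-1))%Z z y t * (B (n+0)%Z z y t - B (n+(-2))%Z z y t))).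
  assert (D1 : Derive f = d1).
  { apply functional_extensionality; intro z. apply is_derive_unique. apply Hx. }
  assert (D2d : forall z, is_derive d1 z (d2 z)).
  { intro z. unfold d1, d2. eapply deq.
    - Dtac ltac:(idtac; leafB B n x y t Hx Hy Ht).
    - simpl. ring. }
  assert (D2 : Derive d1 = d2).
  { apply functional_extensionality; intro z. apply is_derive_unique. apply D2d. }
  assert (E3 : Derive_n f 3 x = Derive d2 x).
  { change (Derive (Derive (Derive f)) x = Derive d2 x). rewrite D1, D2. reflexivity. }
  split; [|split; [|split; [|split]]].
  - intros k Hk. destruct k as [|[|[|[|k]]]].
    + exact I.
    + eexists. apply (Hx 0%Z).
    + change (ex_derive (Derive f) x). rewrite D1. eexists. apply D2d.
    + change (ex_derive (Derive (Derive f)) x). rewrite D1, D2. eexists. unfold d2.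
      Dtac ltac:(idtac; leafB B n x y t Hx Hy Ht).
    + exfalso; lia.
  - cbv beta. eexists. Dtac ltac:(idtac; leafB B n x y t Hx Hy Ht).
  - cbv beta. eexists. Dtac ltac:(idtac; leafB B n x y t Hx Hy Ht).
  - cbv beta. rewD ltac:(idtac; leafB B n x y t Hx Hy Ht).
    normB B n. ring.
  - cbv beta. try fold f. rewrite E3. unfold d2, f.
    rewD ltac:(idtac; leafB B n x y t Hx Hy Ht).
    unfold V6, V4, V2. normB B n. ring.
Qed.
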